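(* Let $G$ and $H$ be finite simple connected graphs and let $L$ be a non-empty proper subset of $V(G)$. Let $T$ be a non-empty cutset of $G\circ_L H$, and write $T=T_0\cup\bigcup_{v\in L}T_v$ with $T_0\subseteq V(G)$ and $T_v\subseteq V(H_v)$ for all $v\in L$. Then: (1) $\emptyset\neq T_0\subsetneq V(G)$. (2) If $v\in L\setminus T_0$, then $T_v=\emptyset$. (3) If $v\in T_0$ (and $v\in L$), then either $T_v=\emptyset$ or $T_v\in\mathscr{C}(H_v)$. (4) If $v\in L\cap T_0$ and $N_G(v)\subseteq T_0$, then $T_v\neq\emptyset$. (5) With $N:=\{v\in L : T_v\neq\emptyset\}$, $$\omega\big((G\circ_L H)\setminus T\big)=\omega(G\setminus T_0)+\sum_{v\in N}\omega(H_v\setminus T_v)+|T_0\cap L|-|N|.$$ (6) Every simplicial vertex of $G$ lying in $T_0$ belongs to $L$. (7) If $T_0\cap L=\emptyset$, then $T=T_0\in\mathscr{C}(G)$ and $T_0$ contains no simplicial vertex of $G$.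
   Context: All graphs are finite and simple. For a graph $\Gamma$ and $A\subseteq V(\Gamma)$, $\Gamma\setminus A$ is the induced subgraph on $V(\Gamma)\setminus A$ and $\omega(\Gamma\setminus A)$ is its number of connected components. A subset $T\subseteq V(\Gamma)$ is a cutset if $T=\emptyset$ or, for every $v\in T$, $\omega(\Gamma\setminus (T\setminus\{v\}))<\omega(\Gamma\setminus T)$; $\mathscr{C}(\Gamma)$ is the set of cutsets. $N_G(v)$ is the set of neighbours of $v$ in $G$. A vertex is simplicial if it belongs to exactly one maximal clique. For a non-empty $L\subseteq V(G)$, $G\circ_L H$ is the graph obtained from $G$ by taking, for each $v\in L$, a disjoint copy $H_v$ of $H$ and joining $v$ to every vertex of $H_v$. *)

(* Defs.v *)
From mathcomp Require Import all_boot.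
Set Implicit Arguments. Unset Strict Implicit. Unset Printing Implicit Defensive.

Definition simple_graph (T : finType) (e : rel T) : Prop :=
  symmetric e /\ irreflexive e.

Definition connected_graph (T : finType) (e : rel T) : Prop :=
  0 < #|T| /\ forall x y : T, connect e x y.

Definition restr (T : finType) (e : rel T) (S : {set T}) : rel T :=
  [rel x y | [&& x \in S, y \in S & e x y]].

Definition ncomp (T : finType) (e : rel T) (S : {set T}) : nat :=
  #|[set [set y in S | connect (restr e S) x y] | x in S]|.

Definition cutset (T : finType) (e : rel T) (V A : {set T}) : Prop :=
  A \subset V /\
  (A = set0 \/ forall v, v \in A -> ncomp e (V :\: (A :\ v)) < ncomp e (V :\: A)).

Definition clique (T : finType) (e : rel T) (K : {set T}) : bool :=
  [forall x in K, forall y in K, (x != y) ==> e x y].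

Definition maximal_clique (T : finType) (e : rel T) (K : {set T}) : bool :=
  clique e K && [forall K' : {set T}, (clique e K' && (K \subset K')) ==> (K' == K)].

Definition simplicial (T : finType) (e : rel T) (v : T) : Prop :=
  #|[set K : {set T} | maximal_clique e K & v \in K]| = 1.

Definition nbhd (T : finType) (e : rel T) (v : T) : {set T} := [set u | e v u].

(* The graph G o_L H on the type TG + TG * TH: inl v is the vertex v of G,
   inr (v, h) is the copy of h in H_v (only present when v \in L). *)
Definition corona_vset (TG TH : finType) (L : {set TG}) : {set TG + TG * TH} :=
  [set x | match x with inl _ => true | inr (v, _) => v \in L end].

Definition corona_rel (TG TH : finType) (eG : rel TG) (eH : rel TH) (L : {set TG})
  : rel (TG + TG * TH) :=
  fun x y =>
    match x, y with
    | inl u, inl w => eG u w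
    | inl u, inr (v, _) => (u == v) && (v \in L)
    | inr (v, _), inl u => (u == v) && (v \in L)
    | inr (v, h), inr (v', h') => [&& v == v', v \in L & eH h h']
    end.

Definition part0 (TG TH : finType) (T : {set TG + TG * TH}) : {set TG} :=
  [set v | inl v \in T].

Definition partv (TG TH : finType) (T : {set TG + TG * TH}) (v : TG) : {set TH} :=
  [set h | inr (v, h) \in T].

(* Main.v *)
Require Import Defs.
From mathcomp Require Import all_boot zify.
Set Implicit Arguments. Unset Strict Implicit. Unset Printing Implicit Defensive.


Section Gen.
Variables (T T' : finType).

Lemma connect_homP (e : rel T) (e' : rel T') (f : T -> T') (P : pred T) x y :
  (forall a b, P a -> e a b -> P b /\ connect e' (f a) (f b)) ->
  P x -> connect e x y -> P y /\ connect e' (f x) (f y).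
Proof.
move=> H Px /connectP [p pth ->].
elim: p x Px pth => [|z p IH] x Px /=; first by split => //; exact: connect0.
case/andP => exz pth.
have [Pz cz] := H _ _ Px exz.
have [Pl cl] := IH z Pz pth.
by split => //; apply: connect_trans cz cl.
Qed.

Lemma card_imset_kernel (K1 K2 : finType) (f : T -> K1) (g : T -> K2) (S : {set T}) :
  {in S &, forall x y, (f x == f y) = (g x == g y)} -> #|f @: S| = #|g @: S|.
Proof.
have gen : forall (K1 K2 : finType) (f : T -> K1) (g : T -> K2),
  {in S &, forall x y, g x = g y -> f x = f y} -> #|f @: S| <= #|g @: S|.
  move=> {}K1 {}K2 {}f {}g H.
  case: (set_0Vmem S) => [-> | [x0 x0S]]; first by rewrite !imset0 cards0.
  pose s k := odflt x0 [pick x in S | g x == k].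
  have sP : forall x, x \in S -> s (g x) \in S /\ g (s (g x)) = g x.
    move=> x xS; rewrite /s; case: pickP => [y /andP [yS /eqP ->] | /(_ x)] //=.
    by rewrite xS eqxx.
  apply: (@leq_trans #|(f \o s) @: (g @: S)|); last exact: leq_imset_card.
  apply: subset_leq_card; apply/subsetP => _ /imsetP [x xS ->].
  apply/imsetP; exists (g x); first by apply/imsetP; exists x.
  have [sS sg] := sP x xS; rewrite /= (H _ _ sS xS sg) //.
move=> H; apply/eqP; rewrite eqn_leq; apply/andP; split; apply: gen.
  by move=> x y xS yS /eqP; rewrite -H // => /eqP.
by move=> x y xS yS /eqP; rewrite H // => /eqP.
Qed.

Definition cls (e : rel T) (S : {set T}) (x : T) : {set T} :=
  [set y in S | connect (restr e S) x y].

Lemma ncompE (e : rel T) (S : {set T}) : ncomp e S = #|cls e S @: S|.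
Proof. by []. Qed.

Lemma restr_sym (e : rel T) (S : {set T}) : symmetric e -> symmetric (restr e S).
Proof. by move=> se x y; rewrite /restr /= se andbCA. Qed.

Lemma cls_kernel (e : rel T) (S : {set T}) x y : symmetric e -> x \in S -> y \in S ->
  (cls e S x == cls e S y) = connect (restr e S) x y.
Proof.
move=> se xS yS; have cs := sym_connect_sym (restr_sym S se).
apply/eqP/idP => [E | cxy].
  have : y \in cls e S y by rewrite inE yS connect0.
  by rewrite -E inE => /andP [].
apply/setP => z; rewrite !inE; case: (z \in S) => //=.
apply/idP/idP => [c | c]; first by apply: connect_trans c; rewrite cs.
exact: connect_trans cxy c.
Qed.

Lemma ncomp_label (K : finType) (e : rel T) (S : {set T}) (f : T -> K) : symmetric e ->
  {in S &, forall x y, (f x == f y) = connect (restr e S) x y} ->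
  ncomp e S = #|f @: S|.
Proof.
move=> se H; rewrite ncompE; apply: card_imset_kernel => x y xS yS.
by rewrite cls_kernel // H.
Qed.

End Gen.


Section Gr.
Variables (T : finType) (e : rel T).
Hypothesis se : symmetric e.

Lemma ncomp0 : ncomp e set0 = 0.
Proof. by rewrite ncompE imset0 cards0. Qed.

Lemma ncompT : #|T| > 0 -> (forall x y, connect e x y) -> ncomp e setT = 1.
Proof.
move=> /card_gt0P [x0 _] con; rewrite ncompE.
have -> : cls e setT @: setT = [set cls e setT x0].
  apply/setP => C; rewrite inE; apply/imsetP/eqP => [[x _ ->] | ->].
    apply/eqP; rewrite cls_kernel ?inE //.
    apply: (connect_sub (e := e)) (con x x0) => a b eab.
    by apply: connect1; rewrite /restr /= !inE.
  by exists x0; rewrite ?inE.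
by rewrite cards1.
Qed.

Lemma restr_U1_A (A : {set T}) u x y : connect (restr e A) x y -> connect (restr e (u |: A)) x y.
Proof.
apply: connect_sub => a b; rewrite /restr /= => /and3P [aA bA eab].
by apply: connect1; rewrite /= !inE aA bA eab !orbT.
Qed.

Lemma ncomp_isolated (A : {set T}) u : u \notin A -> {in A, forall a, ~~ e u a} ->
  ncomp e (u |: A) = (ncomp e A).+1.
Proof.
move=> uA iso.
have conu : forall y, connect (restr e (u |: A)) u y -> y = u.
  move=> y c.
  have H : forall a b, pred1 u a -> restr e (u |: A) a b -> pred1 u b /\ connect e (id a) (id b).
    move=> a b /eqP ->; rewrite /restr /= !inE => /and3P [_ /orP [/eqP ->|bA] eub].
      by split => //; exact: connect0.
    by move: (iso _ bA); rewrite eub.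
  by have [/eqP -> _] := connect_homP H (eqxx u) c.
have cs := sym_connect_sym (restr_sym (u |: A) se).
pose f x := if x == u then None else Some (cls e A x).
rewrite (@ncomp_label _ _ e (u |: A) f) //; last first.
  move=> x y; rewrite !inE /f => /orP [/eqP -> | xA] /orP [/eqP -> | yA].
  - by rewrite eqxx connect0.
  - have yu : (y == u) = false by apply: contraNF uA => /eqP <-.
    rewrite eqxx yu /=; apply/esym/negbTE/negP => /conu /eqP; by rewrite yu.
  - have xu : (x == u) = false by apply: contraNF uA => /eqP <-.
    rewrite eqxx xu /=; apply/esym/negbTE/negP; rewrite cs => /conu /eqP; by rewrite xu.
  have xu : (x == u) = false by apply: contraNF uA => /eqP <-.
  have yu : (y == u) = false by apply: contraNF uA => /eqP <-.
  rewrite xu yu /= (inj_eq (@Some_inj _)) cls_kernel //; apply/idP/idP; first exact: restr_U1_A.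
  move=> c.
  have H : forall a b, predC1 u a -> restr e (u |: A) a b -> predC1 u b /\ connect (restr e A) (id a) (id b).
    move=> a b Pa; rewrite /restr /= !inE => /and3P [/orP [/eqP au|aA] /orP [/eqP bu|bA] eab].
    - by move: Pa; rewrite /= au eqxx.
    - by move: Pa; rewrite /= au eqxx.
    - by move: (iso _ aA); rewrite -bu se eab.
    split; first by apply: contraNneq uA => <-.
    by apply: connect1; rewrite /= aA bA eab.
  by have [_ ] := connect_homP H (negbT xu) c.
rewrite imsetU1 cardsU1 ncompE.
have -> : f @: A = Some @: (cls e A @: A).
  rewrite -imset_comp; apply: eq_in_imset => x xA.
  by rewrite /f /=; case: eqP => // xu; move: uA; rewrite -xu xA.
rewrite card_imset; last by move=> a b [].
rewrite /f eqxx; case: imsetP => //= [[x _ ]] //.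
Qed.

End Gr.


Section Gr.
Variables (T : finType) (e : rel T).
Hypothesis se : symmetric e.

Lemma ncomp_clique (A : {set T}) u : u \notin A ->
  {in A &, forall a b, e u a -> e u b -> (a == b) || e a b} ->
  ncomp e A <= ncomp e (u |: A).
Proof.
move=> uA cl.
rewrite [ncomp e (u |: A)]ncompE.
apply: (@leq_trans #|cls e (u |: A) @: A|); last first.
  by apply: subset_leq_card; apply: imsetS; apply/subsetP => x xA; rewrite !inE xA orbT.
rewrite ncompE leq_eqVlt; apply/orP; left; apply/eqP.
apply: card_imset_kernel => x y xA yA.
rewrite !cls_kernel ?inE ?xA ?yA ?orbT //.
apply/idP/idP; first exact: restr_U1_A.
have xu : (x == u) = false by apply: contraNF uA => /eqP <-.
have yu : (y == u) = false by apply: contraNF uA => /eqP <-.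
pose f z := if z == u then odflt x [pick w in A | e u w] else z.
move=> c.
have H : forall a b, predT a -> restr e (u |: A) a b -> predT b /\ connect (restr e A) (f a) (f b).
  move=> a b _ eab; split => //; move: eab.
  rewrite /restr /f /= !inE => /and3P [/orP [/eqP au|aA] /orP [/eqP bu|bA] eab].
  - by rewrite au bu eqxx connect0.
  - have bu : (b == u) = false by apply: contraNF uA => /eqP <-.
    rewrite au eqxx bu; case: pickP => [w /andP [wA euw] | /(_ b)]; last by rewrite bA -au eab.
    rewrite au in eab; have /orP [/eqP -> | ewb] := cl _ _ wA bA euw eab; first exact: connect0.
    by apply: connect1; rewrite /= wA bA.
  - have au : (a == u) = false by apply: contraNF uA => /eqP <-.
    rewrite bu eqxx au; rewrite bu se in eab.
    case: pickP => [w /andP [wA euw] | /(_ a)]; last by rewrite aA eab.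
    have /orP [/eqP -> | eaw] := cl _ _ aA wA eab euw; first exact: connect0.
    by apply: connect1; rewrite /= wA aA.
  have au : (a == u) = false by apply: contraNF uA => /eqP <-.
  have bu : (b == u) = false by apply: contraNF uA => /eqP <-.
  by rewrite au bu; apply: connect1; rewrite /= aA bA.
by have [_ ] := connect_homP H isT c; rewrite /f xu yu.
Qed.

End Gr.

Section Gr2.
Variables (T : finType) (e : rel T).
Hypothesis se : symmetric e.

Lemma simplicial_clique (u : T) : irreflexive e -> simplicial e u ->
  forall a b, e u a -> e u b -> (a == b) || e a b.
Proof.
move=> ir; rewrite /simplicial => /eqP /cards1P [K0 HK] a b eua eub.
have mc : forall c, e u c -> exists K, [/\ maximal_clique e K, u \in K & c \in K].
  move=> c euc.
  have clq : clique e [set u; c].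
    apply/forallP => x; apply/implyP; rewrite !inE => hx.
    apply/forallP => y; apply/implyP; rewrite !inE => hy; apply/implyP => xy.
    case/orP: hx => /eqP hx; case/orP: hy => /eqP hy; subst.
    + by rewrite eqxx in xy.
    + done.
    + by rewrite se.
    + by rewrite eqxx in xy.
  have [K mK sK] := maxset_exists (P := fun K => clique e K) clq.
  exists K; split.
  - apply/andP; split; first exact: maxsetp mK.
    apply/forallP => K'; apply/implyP => /andP [cK' sKK'].
    by apply/eqP; apply: (maxsetsup mK).
  - by apply: (subsetP sK); rewrite !inE eqxx.
  - by apply: (subsetP sK); rewrite !inE eqxx orbT.
have [Ka [mKa uKa aKa]] := mc a eua.
have [Kb [mKb uKb bKb]] := mc b eub.
have : Ka \in [set K | maximal_clique e K & u \in K] by rewrite inE mKa uKa.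
have : Kb \in [set K | maximal_clique e K & u \in K] by rewrite inE mKb uKb.
rewrite HK !inE => /eqP eb /eqP ea; subst.
case: (a =P b) => //= nab.
move: mKb => /andP [/forallP /(_ a) /implyP /(_ aKa) /forallP /(_ b) /implyP /(_ bKb) + _].
by move/implyP; apply; apply/eqP.
Qed.

End Gr2.


Section Corona.
Variables (TG TH : finType) (eG : rel TG) (eH : rel TH) (L : {set TG}).
Hypotheses (seG : symmetric eG) (seH : symmetric eH).

Local Notation V := (TG + TG * TH)%type.
Local Notation ce := (corona_rel eG eH L).
Local Notation vset := (corona_vset TH L).

Lemma corona_sym : symmetric ce.
Proof.
move=> x y; rewrite /corona_rel.
case: x => [u|[v h]]; case: y => [w|[v' h']] /=.
- exact: seG.
- done.
- done.
by rewrite eq_sym; case: eqP => //= ->; rewrite seH.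
Qed.

Definition pr (x : V) : TG := match x with inl u => u | inr (v, _) => v end.

Variable S : {set V}.
Local Notation W := (vset :\: S).
Local Notation A := (~: part0 S).
Local Notation B v := (~: partv S v).
Local Notation R := (restr ce W).

Lemma memWl u : (inl u \in W) = (u \in A).
Proof. by rewrite !inE andbT. Qed.

Lemma memWr v h : (inr (v, h) \in W) = (v \in L) && (h \in B v).
Proof. by rewrite !inE andbC. Qed.

Lemma Rhom x y : connect R x y -> connect (restr eG A) (pr x) (pr y).
Proof.
move=> c.
have H : forall a b, predT a -> R a b -> predT b /\ connect (restr eG A) (pr a) (pr b).
  move=> a b _; rewrite /restr /=; case: a => [u|[v h]]; case: b => [w|[v' h']];
    rewrite ?memWl ?memWr /=.
  - by case/and3P => uA wA euw; split => //; apply: connect1; rewrite /= uA wA.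
  - by case/and3P => _ _ /andP [/eqP -> _]; split => //; exact: connect0.
  - by case/and3P => _ _ /andP [/eqP -> _]; split => //; exact: connect0.
  - by case/and3P => _ _ /andP [/eqP -> _]; split => //; exact: connect0.
by have [] := connect_homP H isT c.
Qed.

Lemma Ratt_edge a b : R a b -> (pr a \in A) = (pr b \in A).
Proof.
rewrite /restr /=; case: a => [u|[v h]]; case: b => [w|[v' h']];
    rewrite ?memWl ?memWr /=.
- by case/and3P => -> ->.
- by case/and3P => _ _ /andP [/eqP -> _].
- by case/and3P => _ _ /andP [/eqP -> _].
- by case/and3P => _ _ /andP [/eqP -> _].
Qed.

Lemma Ratt x y : connect R x y -> (pr x \in A) = (pr y \in A).
Proof.
move=> c.
have H : forall a b, (fun z => (pr z \in A) == (pr x \in A)) a -> R a b ->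
   (fun z => (pr z \in A) == (pr x \in A)) b /\ connect R a b.
  by move=> a b /= /eqP <- eab; rewrite (Ratt_edge eab) eqxx; split => //; apply: connect1.
by have [/eqP ->] := connect_homP H (eqxx _) c.
Qed.

Lemma Rdet v h y : v \notin A -> connect R (inr (v, h)) y ->
  exists h', y = inr (v, h') /\ connect (restr eH (B v)) h h'.
Proof.
move=> vA c.
pose P (z : V) := match z with inr (v', _) => v' == v | _ => false end.
pose f (z : V) := match z with inr (_, h') => h' | _ => h end.
have H : forall a b, P a -> R a b -> P b /\ connect (restr eH (B v)) (f a) (f b).
  move=> a b; case: a => [u|[v1 h1]] //= /eqP ->.
  rewrite /restr /=; case: b => [w|[v' h']]; rewrite ?memWl ?memWr /=.
    by case/and3P => _ wA /andP [/eqP wv _]; move: vA; rewrite -wv wA.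
  case/and3P => /andP [_ h1B] /andP [_ h'B] /and3P [/eqP e1 _ e2]; subst v'.
  by split => //; apply: connect1; rewrite /= h1B h'B.
have [] := connect_homP H (_ : P (inr (v, h))) c; first by rewrite /P eqxx.
by case: y {c} => [//|[v' h']] /= /eqP -> ch; exists h'.
Qed.

Lemma RG_lift u w : connect (restr eG A) u w -> connect R (inl u) (inl w).
Proof.
move=> c.
have H : forall a b, predT a -> restr eG A a b -> predT b /\ connect R (inl a) (inl b).
  move=> a b _ /and3P [aA bA eab]; split => //; apply: connect1.
  by rewrite /restr /= !memWl aA bA.
by have [] := connect_homP H isT c.
Qed.

Lemma RH_lift v h h' : v \in L -> connect (restr eH (B v)) h h' ->
  connect R (inr (v, h)) (inr (v, h')).
Proof.
move=> vL c.
have H : forall a b, predT a -> restr eH (B v) a b -> predT b /\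
    connect R (inr (v, a)) (inr (v, b)).
  move=> a b _ /and3P [aA bA eab]; split => //; apply: connect1.
  by rewrite /restr /= !memWr vL aA bA eqxx.
by have [] := connect_homP H isT c.
Qed.

Lemma R_att x : x \in W -> pr x \in A ->
  connect R x (inl (pr x)) /\ connect R (inl (pr x)) x.
Proof.
case: x => [u|[v h]] /=; first by split; exact: connect0.
rewrite memWr => /andP [vL hB] vA; split; apply: connect1;
  by rewrite /restr /= memWr memWl vL hB vA eqxx.
Qed.

Definition lab (x : V) : {set TG} + TG * {set TH} :=
  match x with
  | inl u => inl (cls eG A u)
  | inr (v, h) => if v \in A then inl (cls eG A v) else inr (v, cls eH (B v) h)
  end.

Lemma lab_att x : pr x \in A -> lab x = inl (cls eG A (pr x)).
Proof. by case: x => [u|[v h]] //= ->. Qed.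

Lemma lab_kernel : {in W &, forall x y, (lab x == lab y) = connect R x y}.
Proof.
move=> x y xW yW.
case xA: (pr x \in A); case yA: (pr y \in A).
- rewrite !lab_att // (inj_eq (@inl_inj _ _)) cls_kernel //.
  apply/idP/idP; last exact: Rhom.
  move=> c; have [c1 _] := R_att xW xA; have [_ c2] := R_att yW yA.
  by apply: connect_trans c1 _; apply: connect_trans (RG_lift c) c2.
- have nc : connect R x y = false by apply/negP => /Ratt; rewrite xA yA.
  rewrite lab_att // nc; case: y yW yA {nc} => [u|[v h]] /=; first by rewrite memWl => ->.
  by move=> _ ->.
- have nc : connect R x y = false by apply/negP => /Ratt; rewrite xA yA.
  rewrite (lab_att yA) nc; case: x xW xA {nc} => [u|[v h]] /=; first by rewrite memWl => ->.
  by move=> _ ->.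
case: x xW xA => [u|[v h]] /=; first by rewrite memWl => ->.
case: y yW yA => [u|[v' h']] /=; first by rewrite memWl => ->.
rewrite !memWr => /andP [v'L h'B] v'A /andP [vL hB] vA; rewrite vA v'A.
apply/eqP/idP => [[e1 /eqP] | c].
  by subst v'; rewrite cls_kernel // => c; exact: RH_lift.
have [h2 [[e1 e2] ch]] := Rdet (negbT vA) c; subst.
by do 2 congr (_ _); apply/eqP; rewrite cls_kernel.
Qed.

Lemma corona_ncomp :
  ncomp ce W = ncomp eG A + \sum_(v in L :&: part0 S) ncomp eH (B v).
Proof.
rewrite (ncomp_label corona_sym lab_kernel).
pose D := L :&: part0 S.
pose F v : {set TG * {set TH}} := if v \in D then (pair v) @: (cls eH (B v) @: B v) else set0.
pose PH := \bigcup_v F v.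
have E : lab @: W = inl @: (cls eG A @: A) :|: inr @: PH.
  apply/eqP; rewrite eqEsubset; apply/andP; split; apply/subsetP.
    move=> _ /imsetP [x xW ->].
    case xA: (pr x \in A).
      rewrite lab_att // inE; apply/orP; left; apply: imset_f; exact: imset_f.
    case: x xW xA => [u|[v h]] /=; first by rewrite memWl => ->.
    rewrite memWr => /andP [vL hB] vA; rewrite vA inE; apply/orP; right.
    apply: imset_f; apply/bigcupP; exists v => //.
    have vD : v \in D by rewrite !inE vL; move: vA; rewrite !inE => /negbFE.
    by rewrite /F vD; apply: imset_f; apply: imset_f.
  move=> k /setUP [/imsetP [c /imsetP [u uA ->] ->] | /imsetP [[v c] /bigcupP [i _] ]].
    by apply/imsetP; exists (inl u); rewrite ?memWl.
  rewrite /F; case: ifP => [iD | _]; last by rewrite inE.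
  case/imsetP => c' /imsetP [h hB ->] [-> ->] ->.
  apply/imsetP; exists (inr (i, h)).
    by move: iD hB; rewrite !inE => /andP [-> _] ->.
  by rewrite /= ifN //; move: iD; rewrite !inE => /andP [_ ->].
rewrite E cardsU.
have -> : inl @: (cls eG A @: A) :&: inr @: PH = set0.
  apply/setP => k; rewrite !inE; apply/negbTE/negP => /andP [/imsetP [? _ ->]].
  by case/imsetP.
rewrite cards0 subn0 (card_imset _ (@inl_inj _ _)) (card_imset _ (@inr_inj _ _)).
congr (_ + _).
rewrite -sum1_card (partition_disjoint_bigcup addn); last first.
  move=> i j ij; rewrite -setI_eq0; apply/eqP/setP => z; rewrite !inE /F.
  case: ifP => _; last by rewrite inE.
  case: ifP => _; last by rewrite inE andbF.
  apply/negbTE/negP => /andP [/imsetP [? _ ->] /imsetP [? _ [ij' _]]].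
  by move: ij; rewrite ij' eqxx.
rewrite [RHS]big_mkcond; apply: eq_bigr => i _.
rewrite sum1_card /F; case: ifP => iD; last by rewrite cards0.
by rewrite card_imset ?ncompE // => ? ? [].
Qed.

End Corona.


Section Parts.
Variables (TG TH : finType) (T : {set TG + TG * TH}).

Lemma part0_D1l u : part0 (T :\ inl u) = part0 T :\ u.
Proof. by apply/setP => w; rewrite !inE. Qed.

Lemma partv_D1l u v : partv (T :\ inl u) v = partv T v.
Proof. by apply/setP => w; rewrite !inE. Qed.

Lemma part0_D1r v h : part0 (T :\ inr (v, h)) = part0 T.
Proof. by apply/setP => w; rewrite !inE. Qed.

Lemma partv_D1r v h w :
  partv (T :\ inr (v, h)) w = if w == v then partv T v :\ h else partv T w.
Proof.
apply/setP => h'; case: eqP => [-> | nwv]; rewrite !inE //.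
  by rewrite (inj_eq (@inr_inj _ _)) xpair_eqE eqxx.
by case: eqP => //= -[] /nwv.
Qed.

Lemma setC_D1 (X : {set TG}) u : ~: (X :\ u) = u |: ~: X.
Proof. by apply/setP => w; rewrite !inE negb_and negbK orbC. Qed.

End Parts.


Unset Implicit Arguments. Set Strict Implicit.

Theorem proposition3p1 (TG TH : finType) (eG : rel TG) (eH : rel TH) (L : {set TG})
  (T : {set TG + TG * TH}) :
  simple_graph eG -> simple_graph eH ->
  connected_graph eG -> connected_graph eH ->
  L != set0 -> L != [set: TG] ->
  T != set0 -> cutset (corona_rel eG eH L) (corona_vset TH L) T ->
  let T0 := part0 T in
  let Tv := partv T in
  let N := [set v in L | Tv v != set0] in
  (T0 != set0 /\ T0 != [set: TG]) /\
  (forall v, v \in L -> v \notin T0 -> Tv v = set0) /\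
  (forall v, v \in L -> v \in T0 -> Tv v = set0 \/ cutset eH [set: TH] (Tv v)) /\
  (forall v, v \in L -> v \in T0 -> nbhd eG v \subset T0 -> Tv v != set0) /\
  (ncomp (corona_rel eG eH L) (corona_vset TH L :\: T) + #|N| =
        ncomp eG (~: T0) + \sum_(v in N) ncomp eH (~: Tv v) + #|T0 :&: L|) /\
      (forall v, simplicial eG v -> v \in T0 -> v \in L) /\
      (T0 :&: L = set0 ->
         [/\ T = [set inl v | v in T0], cutset eG [set: TG] T0 &
             forall v, v \in T0 -> ~ simplicial eG v]).
Proof.
move=> [sG iG] [sH iH] [cG0 cG] [cH0 cH] L0 LT Tne [Tsub Tcut] T0 Tv N.
rewrite {}/N {}/Tv {}/T0.
pose Fv (S : {set TG + TG * TH}) := ncomp eG (~: part0 S) +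
  \sum_(v in L :&: part0 S) ncomp eH (~: partv S v).
have hcut : forall x, x \in T -> Fv (T :\ x) < Fv T.
  move=> x xT; rewrite /Fv -!(@corona_ncomp _ _ eG eH L sG sH).
  case: Tcut => [T0' | H]; first by move: Tne; rewrite T0' eqxx.
  exact: H.
have TL : forall v h, inr (v, h) \in T -> v \in L.
  by move=> v h /(subsetP Tsub); rewrite inE.
have inrT0 : forall v h, inr (v, h) \in T -> v \in part0 T.
  move=> v h xT; apply/negPn/negP => vT0.
  have := hcut _ xT; rewrite /Fv part0_D1r.
  rewrite (eq_bigr (fun w => ncomp eH (~: partv T w))) ?ltnn // => w.
  rewrite inE => /andP [_ wT0].
  by rewrite partv_D1r; case: eqP => // wv; move: vT0; rewrite -wv wT0.
have ncH1 : ncomp eH (~: set0) = 1 by rewrite setC0; apply: ncompT.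
have P6 : forall v, simplicial eG v -> v \in part0 T -> v \in L.
  move=> v simp vT0; apply/negPn/negP => vL.
  have uTl : inl v \in T by move: vT0; rewrite inE.
  have := hcut _ uTl; rewrite /Fv part0_D1l.
  under eq_bigr => w _ do rewrite partv_D1l.
  have -> : L :&: (part0 T :\ v) = L :&: part0 T.
    apply/setP => w; rewrite !inE; case: eqP => // ->; by rewrite (negbTE vL).
  rewrite setC_D1 ltn_add2r ltnNge ncomp_clique //.
    by rewrite inE negbK.
  by move=> a b _ _; apply: simplicial_clique.
split.
  split.
    case/set0Pn: Tne => x xT; apply/set0Pn.
    case: x xT => [u | [v h]] xT; first by exists u; rewrite inE.
    by exists v; apply: inrT0 xT.
  apply/eqP => T0T.
  have : ~~ ([set: TG] \subset L) by rewrite subTset.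
  case/subsetPn => u _ uL.
  have uTl : inl u \in T by move: (in_setT u); rewrite -T0T inE.
  have := hcut _ uTl; rewrite /Fv part0_D1l.
  under eq_bigr => w _ do rewrite partv_D1l.
  have -> : L :&: (part0 T :\ u) = L :&: part0 T.
    apply/setP => w; rewrite !inE; case: eqP => // ->; by rewrite (negbTE uL).
  rewrite setC_D1 T0T setCT ncomp_isolated ?inE //; last by move=> x; rewrite inE.
  by rewrite ltn_add2r ltnNge leqnSn.
split.
  move=> v vL vT0; apply/setP => h; rewrite !inE.
  by apply/negbTE/negP => /inrT0; apply/negP.
split.
  move=> v vL vT0.
  case: (eqVneq (partv T v) set0) => [-> | ne]; [by left | right].
  split; first exact: subsetT.
  right => h hv.
  have xT : inr (v, h) \in T by move: hv; rewrite inE.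
  have := hcut _ xT; rewrite /Fv part0_D1r ltn_add2l.
  have vD : v \in L :&: part0 T by rewrite inE vL.
  rewrite (big_setD1 _ vD) /= (big_setD1 _ vD) /= partv_D1r eqxx.
  rewrite (eq_bigr (fun w => ncomp eH (~: partv T w))); last first.
    by move=> w; rewrite !inE => /andP [wv _]; rewrite partv_D1r (negbTE wv).
  by rewrite ltn_add2r !setTD.
split.
  move=> v vL vT0 nb; apply/negP => /eqP Tv0.
  have uTl : inl v \in T by move: vT0; rewrite inE.
  have := hcut _ uTl; rewrite /Fv part0_D1l.
  under eq_bigr => w _ do rewrite partv_D1l.
  have vD : v \in L :&: part0 T by rewrite inE vL.
  have -> : L :&: (part0 T :\ v) = (L :&: part0 T) :\ v.
    by apply/setP => w; rewrite !inE; bool_congr.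
  rewrite setC_D1 ncomp_isolated //; last first.
      move=> a; rewrite inE => aT0; apply/negP => eva.
      by move: aT0; rewrite (subsetP nb) // inE.
    by rewrite inE negbK.
  rewrite [in X in _ < X](big_setD1 _ vD) /= Tv0 ncH1.
  lia.
split.
  rewrite (@corona_ncomp _ _ eG eH L sG sH).
  set D := L :&: part0 T.
  set N := [set v in L | partv T v != set0].
  have ND : N \subset D.
    apply/subsetP => v; rewrite !inE => /andP [vL /set0Pn [h]].
    by rewrite inE vL => /inrT0; rewrite inE.
  rewrite (big_setID N) /= (setIidPr ND).
  rewrite [\sum_(i in D :\: N) _](eq_bigr (fun _ => 1)); last first.
    move=> w; rewrite !inE => /andP [+ /andP [wL _]]; rewrite wL /= negbK => /eqP ->.
    exact: ncH1.
  rewrite sum1_card [part0 T :&: L]setIC -/D -(cardsID N D) (setIidPr ND).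
  lia.
split; first exact: P6.
move=> D0.
have noR : forall v h, inr (v, h) \in T -> False.
  move=> v h xT; have : v \in part0 T :&: L by rewrite inE (inrT0 _ _ xT) (TL _ _ xT).
  by rewrite D0 inE.
split.
- apply/setP => [[u | [v h]]].
    by rewrite mem_imset ?inE //; exact: inl_inj.
  apply/idP/imsetP => [/noR // | [u _ //]].
- split; first exact: subsetT.
  right => v vT0.
  have uTl : inl v \in T by move: vT0; rewrite inE.
  have := hcut _ uTl; rewrite /Fv part0_D1l.
  have -> : L :&: part0 T = set0 by rewrite setIC.
  have -> : L :&: (part0 T :\ v) = set0.
    by apply/setP => w; move/setP: D0 => /(_ w); rewrite !inE; case: (w \in L); case: (w == v); case: (inl w \in T).
  by rewrite !big_set0 !addn0 !setTD.
- move=> v vT0 simp; have := P6 _ simp vT0 => vL.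
  move: vT0 vL; rewrite inE => vT0 vL; by move/setP: D0 => /(_ v); rewrite !inE vT0 vL.
Qed.
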